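(* Assume $\|\nabla f_t(x)\|_\infty\le G_\infty$ for all $t\in[n]$, $x\in\mathcal D$, where $\min\{G,G_\infty,B\}\ge1$ and $\alpha>0$. Let $\phi=\sqrt{70(8G^2B^2\alpha+G^2B^2+1/\alpha)}$, $C_n>0$, and assume $\lambda\ge d^{1.5}\phi\,n^{1/3}/C_n^{1/3}$. Let $[i_s,i_t]\in\mathcal P$ be a bin of the key partition such that, across some coordinate $k\in[d]$, the offline optimal takes the form of Structure 1 or Structure 2 on some sub-interval of $[i_s,i_t]$. Let $$\mu_{\mathrm{th}}=\sqrt{\frac{140d^{1.5}(8G^2B^2\alpha+G^2B^2+1/\alpha)G_\infty C_n^{1/3}\log n}{G^2\phi\,n^{1/3}}}.$$ If $C_n\le\left(\frac{B^2G^2\phi}{560d^{1.5}(8G^2B^2\alpha+G^2B^2+1/\alpha)G_\infty\log n}\right)^3n$, then $\mathrm{GAP}_{\min}(-B,[i_s,i_t])[k]\vee\mathrm{GAP}_{\min}(B,[i_s,i_t])[k]\ge\mu_{\mathrm{th}}$.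
   Context: $\mathcal D=\{x\in\mathbb R^d:\|x\|_\infty\le B\}$; $[a,b]=\{a,\dots,b\}$; $a\vee b=\max\{a,b\}$; $G>0$; $f_1,\dots,f_n$ are differentiable convex functions on $\mathcal D$ (the surrogate losses $f_t(x)=(\sqrt{\alpha/2}\nabla\ell_t(x_t)^T(x-x_t)+1/\sqrt{2\alpha})^2$). Offline optimal: given $C_n>0$, $u_1,\dots,u_n\in\mathbb R^d$ is an optimal solution of: minimize $\sum_{t=1}^nf_t(\tilde u_t)$ subject to $\sum_{t=2}^n\|\tilde u_t-\tilde u_{t-1}\|_1\le C_n$ and $\|\tilde u_t\|_\infty\le B$; $\lambda\ge0$ and $\gamma^\pm_t\in\mathbb R^d_{\ge0}$ are optimal dual variables satisfying: there are $s_t\in[-1,1]^d$ with $s_t[k]=\mathrm{sign}(u_{t+1}[k]-u_t[k])$ whenever nonzero, $s_0=s_n=0$, $\nabla f_t(u_t)=\lambda(s_t-s_{t-1})+\gamma^-_t-\gamma^+_t$, $\lambda(\sum_{t=2}^n\|u_t-u_{t-1}\|_1-C_n)=0$, $\gamma^-_t[k](u_t[k]+B)=0$, $\gamma^+_t[k](u_t[k]-B)=0$. Structure 1 across coordinate $k$ on $[a,b]\subseteq\{2,\dots,n-1\}$: $u_j[k]=u_a[k]\in(-B,B)$ for all $j\in[a,b]$, $u_b[k]>u_{b+1}[k]$ and $u_a[k]>u_{a-1}[k]$. Structure 2: same but with $u_b[k]<u_{b+1}[k]$ and $u_a[k]<u_{a-1}[k]$. $\mathrm{GAP}_{\min}(\beta,[a,b])[k]=\min_{j\in[a,b]}|u_j[k]-\beta|$.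 Key partition $\mathcal P$: $[n]$ is partitioned greedily into consecutive bins: the first bin starts at $i_s=1$; a bin starting at $i_s$ ends at the largest $i_t\in[i_s,n]$ with $\sum_{j=i_s+1}^{i_t}\|u_j-u_{j-1}\|_1\le B/\sqrt{i_t-i_s+1}$; the next bin starts at $i_t+1$, until $n$ is covered. *)

(* Defs.v *)
From HB Require Import structures.
From mathcomp Require Import all_boot all_order all_algebra.
From mathcomp Require Import all_classical all_reals all_analysis.
Set Implicit Arguments. Unset Strict Implicit. Unset Printing Implicit Defensive.
Import Order.TTheory GRing.Theory Num.Theory.
Import numFieldNormedType.Exports.
Local Open Scope ring_scope.

Section Defs.
Variables (R : realType) (d : nat).
Notation vec := 'rV[R]_d.

Definition ent (v : vec) (k : 'I_d) : R := v ord0 k.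

Definition dotv (v w : vec) : R := \sum_(k < d) ent v k * ent w k.
Definition norm1 (v : vec) : R := \sum_(k < d) `|ent v k|.
Definition norm2 (v : vec) : R := Num.sqrt (\sum_(k < d) ent v k ^+ 2).

Definition inD (B : R) (x : vec) : Prop := forall k, `|ent x k| <= B.

(* surrogate loss f_t(x) = (sqrt(alpha/2) g_t^T (x - x_t) + 1/sqrt(2 alpha))^2,
   where g_t = grad l_t(x_t) *)
Definition surrogate (alpha : R) (g xt : vec) (x : vec) : R :=
  (Num.sqrt (alpha / 2) * dotv g (x - xt) + (Num.sqrt (2 * alpha))^-1) ^+ 2.

Definition gradk (F : vec -> R) (x : vec) (k : 'I_d) : R :=
  'D_(delta_mx ord0 k) F x.

Definition TV (u : nat -> vec) (a b : nat) : R :=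
  \sum_(a.+1 <= t < b.+1) norm1 (u t - u t.-1).

Definition bin_end (u : nat -> vec) (B : R) (n i : nat) : nat :=
  \max_(i <= j < n.+1 | TV u i j <= B / Num.sqrt ((j - i + 1)%N%:R)) j.

Inductive key_bin (u : nat -> vec) (B : R) (n : nat) : nat -> nat -> Prop :=
| key_bin_first : (1 <= n)%N -> key_bin u B n 1 (bin_end u B n 1)
| key_bin_next : forall i j, key_bin u B n i j -> (j < n)%N ->
    key_bin u B n j.+1 (bin_end u B n j.+1).

Definition structure1 (u : nat -> vec) (B : R) (n : nat) (k : 'I_d) (a b : nat) : Prop :=
  [/\ (2 <= a <= b)%N /\ (b <= n.-1)%N,
      (forall j, (a <= j <= b)%N -> ent (u j) k = ent (u a) k),
      - B < ent (u a) k < B,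
      ent (u b) k > ent (u b.+1) k &
      ent (u a) k > ent (u a.-1) k].

Definition structure2 (u : nat -> vec) (B : R) (n : nat) (k : 'I_d) (a b : nat) : Prop :=
  [/\ (2 <= a <= b)%N /\ (b <= n.-1)%N,
      (forall j, (a <= j <= b)%N -> ent (u j) k = ent (u a) k),
      - B < ent (u a) k < B,
      ent (u b) k < ent (u b.+1) k &
      ent (u a) k < ent (u a.-1) k].

Definition GAPmin (u : nat -> vec) (beta : R) (a b : nat) (k : 'I_d) : R :=
  \big[Order.min/`|ent (u a) k - beta|]_(a <= j < b.+1) `|ent (u j) k - beta|.

End Defs.

(* Main.v *)
Require Import Defs.
From HB Require Import structures.
From mathcomp Require Import all_boot all_order all_algebra.
From mathcomp Require Import all_classical all_reals all_analysis.
From mathcomp Require Import ring lra.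
Import Order.TTheory GRing.Theory Num.Theory.
Import numFieldNormedType.Exports.
Local Open Scope ring_scope.

Section Helpers.
Variables (R : realType) (d : nat).

Lemma norm1_ge0 (v : 'rV[R]_d) : 0 <= norm1 v.
Proof. by apply: sumr_ge0 => i _. Qed.

Lemma ent_le_norm1 (v : 'rV[R]_d) k : `|ent v k| <= norm1 v.
Proof.
rewrite /norm1 (bigD1 k) //= lerDl; by apply: sumr_ge0 => i _.
Qed.

Lemma TV_tele (u : nat -> 'rV[R]_d) k a b : (a <= b)%N ->
  `|ent (u b) k - ent (u a) k| <= TV u a b.
Proof.
elim: b => [|b IH].
  by rewrite leqn0 => /eqP ->; rewrite subrr normr0 /TV big_geq.
rewrite leq_eqVlt => /orP [/eqP ->|hab]; first by rewrite subrr normr0 /TV big_geq.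
have hab' : (a <= b)%N by [].
rewrite /TV big_nat_recr //= -/(TV u a b).
have h1 := IH hab'.
have h2 : `|ent (u b.+1) k - ent (u b) k| <= norm1 (u b.+1 - u b).
  have := ent_le_norm1 (u b.+1 - u b) k.
  by rewrite /ent !mxE.
have -> : ent (u b.+1) k - ent (u a) k =
   (ent (u b.+1) k - ent (u b) k) + (ent (u b) k - ent (u a) k) by rewrite addrA subrK.
apply: (le_trans (ler_normD _ _)). rewrite addrC. exact: lerD.
Qed.

Lemma TV_mono (u : nat -> 'rV[R]_d) a a' b' b :
  (a <= a')%N -> (a' <= b')%N -> (b' <= b)%N -> TV u a' b' <= TV u a b.
Proof.
move=> h1 h2 h3; rewrite /TV.
have e1 : (a.+1 <= a'.+1)%N by [].
have e2 : (a'.+1 <= b'.+1)%N by [].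
have e3 : (b'.+1 <= b.+1)%N by [].
rewrite [X in _ <= X](@big_cat_nat _ _ _ a'.+1) /=; last exact: leq_trans e2 e3.
rewrite [X in _ <= _ + X](@big_cat_nat _ _ _ b'.+1) //=.
rewrite addrCA -[X in X <= _]addr0 lerD2l addrC; apply: addr_ge0; apply: sumr_ge0 => i _;
  exact: norm1_ge0.
all: try by [].
all: try exact: norm1_ge0.
Qed.

Lemma bigmin_attained (F : nat -> R) (x0 : R) (s : seq nat) :
  \big[Order.min/x0]_(j <- s) F j = x0 \/
  exists2 j, j \in s & \big[Order.min/x0]_(j <- s) F j = F j.
Proof.
elim: s => [|x s IH]; first by left; rewrite big_nil.
rewrite big_cons /Order.min; case: ifP => h.
  by right; exists x => //; rewrite mem_head.
case: IH => [->|[j js ->]]; first by left.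
by right; exists j => //; rewrite in_cons js orbT.
Qed.

Lemma GAPmin_attained (u : nat -> 'rV[R]_d) beta a b k : (a <= b)%N ->
  exists2 j, (a <= j <= b)%N & GAPmin u beta a b k = `|ent (u j) k - beta|.
Proof.
move=> hab; rewrite /GAPmin.
case: (bigmin_attained (fun j => `|ent (u j) k - beta|) `|ent (u a) k - beta|
   (index_iota a b.+1)) => [->|[j]]; first by exists a => //; rewrite leqnn.
by rewrite mem_index_iota ltnS => hj ->; exists j.
Qed.

Lemma bigmax_attained (P : pred nat) (s : seq nat) :
  \max_(j <- s | P j) j = 0%N \/
  (\max_(j <- s | P j) j \in s /\ P (\max_(j <- s | P j) j)).
Proof.
elim: s => [|x s IH]; first by left; rewrite big_nil.
rewrite big_cons; case: (boolP (P x)) => hx //.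
  case: (leqP x (\max_(j <- s | P j) j)) => h.
    case: IH => [E|[h1 h2]].
      by left.
    by right; rewrite in_cons h1 orbT.
  by right; rewrite mem_head.
case: IH => [->|[h1 h2]]; first by left.
by right; rewrite in_cons h1 orbT.
Qed.

Lemma bin_end_prop (u : nat -> 'rV[R]_d) B n i : 0 <= B -> (1 <= i <= n)%N ->
  (i <= bin_end u B n i)%N /\ TV u i (bin_end u B n i) <= B.
Proof.
move=> hB /andP [hi1 hin].
have hP : TV u i i <= B / Num.sqrt ((i - i + 1)%N%:R).
  by rewrite /TV big_geq // subnn add0n sqrtr1 divr1.
have hge : (i <= bin_end u B n i)%N.
  have hm : i \in index_iota i n.+1 by rewrite mem_index_iota leqnn ltnS.
  exact: (@leq_bigmax_seq nat (index_iota i n.+1)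
    (fun j => TV u i j <= B / Num.sqrt ((j - i + 1)%N%:R)) (fun j => j) i hm hP).
split=> //.
move: hge; rewrite /bin_end.
case: (bigmax_attained (fun j => TV u i j <= B / Num.sqrt ((j - i + 1)%N%:R))
   (index_iota i n.+1)) => [->|[_ h]]; first by rewrite leqn0 => /eqP E; move: hi1; rewrite E.
move=> _; apply: (le_trans h).
set m := (_ - _ + 1)%N.
have hm : 1 <= Num.sqrt (m%:R : R).
  have hm1 : (1:R) <= m%:R by rewrite ler1n /m addn1.
  apply: le_trans (_ : Num.sqrt 1 <= _); first by rewrite sqrtr1.
  by rewrite ler_sqrt.
rewrite ler_pdivrMr; last by apply: lt_le_trans hm.
by rewrite ler_peMr.
Qed.

Lemma key_bin_inv (u : nat -> 'rV[R]_d) B n i j : key_bin u B n i j ->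
  ((1 <= i)%N /\ (i <= n)%N) /\ j = bin_end u B n i.
Proof. by case=> [h1|i' j' _ hj]. Qed.

End Helpers.
Theorem mainTheorem16 (R : realType) (d n : nat) (B G Ginf alpha Cn lam : R)
  (g xs u s gm gp : nat -> 'rV[R]_d)
  (* standing assumptions *)
  (hG : 1 <= G) (hGinf : 1 <= Ginf) (hB : 1 <= B) (halpha : 0 < alpha)
  (hCn : 0 < Cn)
  (hxs : forall t, (1 <= t <= n)%N -> inD B (xs t))
  (hg : forall t, (1 <= t <= n)%N -> norm2 (g t) <= G)
  (* gradient bound on the surrogate losses *)
  (hGrad : forall t, (1 <= t <= n)%N -> forall x, inD B x -> forall k,
      `|gradk (surrogate alpha (g t) (xs t)) x k| <= Ginf)
  (* u_1..u_n is an optimal solution of the offline problem *)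
  (hfeasTV : TV u 1 n <= Cn)
  (hfeasD : forall t, (1 <= t <= n)%N -> inD B (u t))
  (hopt : forall v : nat -> 'rV[R]_d, TV v 1 n <= Cn ->
      (forall t, (1 <= t <= n)%N -> inD B (v t)) ->
      \sum_(1 <= t < n.+1) surrogate alpha (g t) (xs t) (u t)
      <= \sum_(1 <= t < n.+1) surrogate alpha (g t) (xs t) (v t))
  (* optimal dual variables and KKT conditions *)
  (hlam0 : 0 <= lam)
  (hgm0 : forall t k, (1 <= t <= n)%N -> 0 <= ent (gm t) k)
  (hgp0 : forall t k, (1 <= t <= n)%N -> 0 <= ent (gp t) k)
  (hs_range : forall t k, (t <= n)%N -> -1 <= ent (s t) k <= 1)
  (hs_sign : forall t k, (1 <= t < n)%N ->
      ent (u t.+1) k - ent (u t) k != 0 ->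
      ent (s t) k = Num.sg (ent (u t.+1) k - ent (u t) k))
  (hs0 : s 0%N = 0) (hsn : s n = 0)
  (hstat : forall t k, (1 <= t <= n)%N ->
      gradk (surrogate alpha (g t) (xs t)) (u t) k
      = lam * (ent (s t) k - ent (s t.-1) k) + ent (gm t) k - ent (gp t) k)
  (hcs_lam : lam * (TV u 1 n - Cn) = 0)
  (hcs_gm : forall t k, (1 <= t <= n)%N -> ent (gm t) k * (ent (u t) k + B) = 0)
  (hcs_gp : forall t k, (1 <= t <= n)%N -> ent (gp t) k * (ent (u t) k - B) = 0)
  (* lower bound on lambda *)
  (hlam : let K := 8 * G ^+ 2 * B ^+ 2 * alpha + G ^+ 2 * B ^+ 2 + alpha^-1 in
          let phi := Num.sqrt (70 * K) in
          lam >= (d%:R `^ (3 / 2)) * phi * (n%:R `^ (3^-1)) / (Cn `^ (3^-1)))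
  (* the bin and the structure *)
  (i_s i_t : nat) (hbin : key_bin u B n i_s i_t)
  (k : 'I_d) (a b : nat) (hab : (i_s <= a)%N /\ (b <= i_t)%N)
  (hstruct : structure1 u B n k a b \/ structure2 u B n k a b)
  (* budget condition *)
  (hCnsmall : let K := 8 * G ^+ 2 * B ^+ 2 * alpha + G ^+ 2 * B ^+ 2 + alpha^-1 in
          let phi := Num.sqrt (70 * K) in
          Cn <= ((B ^+ 2 * G ^+ 2 * phi)
                 / (560 * (d%:R `^ (3 / 2)) * K * Ginf * ln n%:R)) ^+ 3 * n%:R) :
  let K := 8 * G ^+ 2 * B ^+ 2 * alpha + G ^+ 2 * B ^+ 2 + alpha^-1 in
  let phi := Num.sqrt (70 * K) in
  let mu_th := Num.sqrt ((140 * (d%:R `^ (3 / 2)) * K * Ginf * (Cn `^ (3^-1)) * ln n%:R)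
                         / (G ^+ 2 * phi * (n%:R `^ (3^-1)))) in
  Num.max (GAPmin u (- B) i_s i_t k) (GAPmin u B i_s i_t k) >= mu_th.
Proof.
cbv zeta in hCnsmall |- *.
set K := (8 * G ^+ 2 * B ^+ 2 * alpha + G ^+ 2 * B ^+ 2 + alpha^-1) in hCnsmall *.
set phi := Num.sqrt (70 * K) in hCnsmall *.
set mu_th := Num.sqrt _.
have hd : (0 < d)%N by apply: leq_ltn_trans (ltn_ord k).
have [[hs1 hsN] ->] : ((1 <= i_s)%N /\ (i_s <= n)%N) /\ i_t = bin_end u B n i_s.
  exact: key_bin_inv hbin.
set i_t' := bin_end u B n i_s.
have hin : (1 <= i_s <= n)%N by rewrite hs1 hsN.
have [hst hTV] := @bin_end_prop R d u B n i_s (le_trans ler01 hB) hin.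
rewrite -/i_t' in hst hTV.
have hmu : mu_th <= B / 2.
  have hB2 : B / 2 = Num.sqrt ((B / 2) ^+ 2) by rewrite sqrtr_sqr ger0_norm //; lra.
  rewrite hB2 /mu_th ler_sqrt; last by apply: sqr_ge0.
  have hK : 0 < K by rewrite /K; have := invr_gt0 alpha; rewrite halpha => ha; nra.
  have hphi : 0 < phi by rewrite /phi sqrtr_gt0; lra.
  have hA : (0:R) < (d%:R : R) `^ (3 / 2) by apply: powR_gt0; rewrite ltr0n.
  have hm : (0:R) < (n%:R:R) `^ 3^-1 by apply: powR_gt0; rewrite ltr0n; apply: leq_trans hs1 hsN.
  have hG2 : 0 < G ^+ 2 by rewrite exprn_gt0 //; lra.
  case: (leqP n 1) => hn1.
    have hn : n = 1%N by apply/eqP; rewrite eqn_leq hn1 /=; exact: leq_trans hs1 hsN.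
    rewrite hn ln1 mulr0 mul0r; exact: sqr_ge0.
  have hL : 0 < ln (n%:R : R) by apply: ln_gt0; rewrite ltr1n.
  set A := d%:R `^ (3 / 2) in hA hCnsmall *.
  set L := ln (n%:R : R) in hL hCnsmall *.
  set m := n%:R `^ 3^-1 in hm *.
  set X := B ^+ 2 * G ^+ 2 * phi / (560 * A * K * Ginf * L) in hCnsmall.
  have hD : 0 < 560 * A * K * Ginf * L.
    have h560 : (0:R) < 560 by rewrite ltr0n.
    have hGi : 0 < Ginf by lra.
    exact: (mulr_gt0 (mulr_gt0 (mulr_gt0 (mulr_gt0 h560 hA) hK) hGi) hL).
  have hX : 0 <= X.
    rewrite /X; apply: divr_ge0; last exact: ltW.
    apply: mulr_ge0; last exact: ltW.
    by apply: mulr_ge0; apply: sqr_ge0.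
  have hc : Cn `^ 3^-1 <= X * m.
    have -> : X * m = (X ^+ 3 * n%:R) `^ 3^-1.
      rewrite powRM ?exprn_ge0 ?ler0n //.
      rewrite -powR_mulrn // -powRrM mulfV ?powRr1 //.
    have h3 : (0:R) <= 3^-1 by rewrite invr_ge0 ler0n.
    apply: (@ge0_ler_powR R (3^-1) h3 Cn (X ^+ 3 * n%:R)) => //.
    - by rewrite nnegrE; apply: ltW.
    - by rewrite nnegrE; apply: mulr_ge0; rewrite ?exprn_ge0 ?ler0n.
  have hGi : 0 < Ginf by lra.
  have h140 : (0:R) < 140 * A * K * Ginf.
    have h140 : (0:R) < 140 by rewrite ltr0n.
    exact: (mulr_gt0 (mulr_gt0 (mulr_gt0 h140 hA) hK) hGi).
  have hden : 0 < G ^+ 2 * phi * m by exact: (mulr_gt0 (mulr_gt0 hG2 hphi) hm).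
  apply: le_trans (_ : 140 * A * K * Ginf * (X * m) * L / (G ^+ 2 * phi * m) <= _).
    rewrite ler_pM2r; last by rewrite invr_gt0.
    by rewrite ler_pM2r // ler_pM2l.
  have hGn : G != 0 by rewrite gt_eqF //; lra.
  rewrite /X le_eqVlt; apply/orP; left; apply/eqP.
  field.
  by rewrite (gt_eqF hm) (gt_eqF hphi) hGn (gt_eqF hL) (gt_eqF hGi) (gt_eqF hK) (gt_eqF hA).
rewrite leNgt; apply/negP => hlt.
have := lt_le_trans hlt hmu; rewrite gt_max => /andP [h1 h2].
have [j1 hj1 e1] := @GAPmin_attained R d u (- B) i_s i_t' k hst.
have [j2 hj2 e2] := @GAPmin_attained R d u B i_s i_t' k hst.
rewrite e1 ltr_norml in h1; rewrite e2 ltr_norml in h2.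
have hd12 : `|ent (u j2) k - ent (u j1) k| <= B.
  apply: le_trans hTV.
  move/andP: hj1 => [a1 b1]; move/andP: hj2 => [a2 b2].
  case: (leqP j1 j2) => hj.
    apply: le_trans (@TV_tele R d u k _ _ hj) _; exact: (@TV_mono R d u).
  rewrite distrC; apply: le_trans (@TV_tele R d u k _ _ (ltnW hj)) _; apply: (@TV_mono R d u) => //; exact: ltnW.
rewrite ler_norml in hd12.
move/andP: h1 => [h1 h1']; move/andP: h2 => [h2 h2']; move/andP: hd12 => [h3 h3'].
lra.
Qed.
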